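(* Let $k\ge1$, $n=2^k-1$, and let $\mathbf{G}\in\mathbb{F}_2^{k\times n}$ be a generator matrix of the $[2^k-1,k,2^{k-1}]_2$ binary simplex code (its columns are all nonzero vectors of $\mathbb{F}_2^k$). Consider the storage system with files $f_1,\dots,f_k$ in which each file's recovery sets are all its recovery sets of size $1$ or $2$ and all servers have service rate $1$. Let $G$ be the graph representation of the code. Then $m(G)=\lambda^\star(\mathbf{G})=v(G)=2^{k-1}$.
   Context: Let $\mathbf{g}_1,\dots,\mathbf{g}_n$ be the columns of $\mathbf{G}$ and $\mathbf{e}_i$ the $i$-th unit vector. The recovery sets of size at most 2 for file $f_i$ are the sets $\{r\}$ with $\mathbf{g}_r=\mathbf{e}_i$ and $\{a,b\}$, $a\ne b$, with $\mathbf{g}_a+\mathbf{g}_b=\mathbf{e}_i$; list them as $R_{i,1},\dots,R_{i,t_i}$. The service rate region $\mathcal{S}(\mathbf{G})$ is the set of $\boldsymbol{\lambda}\in\mathbb{R}^k$ for which there exist real $\lambda_{i,j}\ge0$ with $\sum_j\lambda_{i,j}=\lambda_i$ for all $i$ and $\sum_{i}\sum_{j:\,l\in R_{i,j}}\lambda_{i,j}\le1$ for every server $l\in[n]$; the service capacity is $\lambda^\star(\mathbf{G})=\max\{\sum_i\lambda_i:\boldsymbol{\lambda}\in\mathcal{S}(\mathbf{G})\}$. The graph representation $G$ has vertex set $[n]$ plus one new dummy vertex per size-1 recovery set, and one edge per recovery set: $\{a,b\}$ gives an edge $ab$, $\{r\}$ gives an edge between $r$ and its dummy vertex. $m(G)$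 is the matching number (maximum number of pairwise non-adjacent edges) and $v(G)$ the vertex cover number (minimum number of vertices meeting all edges). *)

(* Defs.v *)
From mathcomp Require Import all_boot all_order all_algebra.
From mathcomp Require Import reals.
Set Implicit Arguments. Unset Strict Implicit. Unset Printing Implicit Defensive.
Import Order.TTheory GRing.Theory Num.Theory.
Local Open Scope ring_scope.

Section Storage.
Variables (k n : nat) (G : 'M['F_2]_(k, n)).

Definition unitv (i : 'I_k) : 'cV['F_2]_k := delta_mx i 0.

Definition recsets (i : 'I_k) : {set {set 'I_n}} :=
  [set S : {set 'I_n} |
     [exists r : 'I_n, (S == [set r]) && (col r G == unitv i)]
  || [exists a : 'I_n, exists b : 'I_n,
        [&& a != b, S == [set a; b] & col a G + col b G == unitv i]]].

Definition in_service_region (R : realType) (lam : 'I_k -> R) : Prop :=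
  exists x : 'I_k -> {set 'I_n} -> R,
    [/\ (forall i S, S \in recsets i -> 0 <= x i S),
        (forall i, \sum_(S in recsets i) x i S = lam i) &
        (forall l : 'I_n, \sum_(i < k) \sum_(S in recsets i | l \in S) x i S <= 1)].

Definition is_service_capacity (R : realType) (c : R) : Prop :=
  (exists lam : 'I_k -> R, in_service_region lam /\ \sum_(i < k) lam i = c) /\
  (forall lam : 'I_k -> R, in_service_region lam -> \sum_(i < k) lam i <= c).

(* Edges are indexed by recovery sets (i, S);
   vertices are the servers (inl) plus dummy vertices (inr (i,S)), one for
   each size-1 recovery set (i,S) (other inr vertices are isolated and
   irrelevant). *)
Definition edgeT := ('I_k * {set 'I_n})%type.
Definition vertT := ('I_n + edgeT)%type.

Definition is_edge (e : edgeT) : bool := e.2 \in recsets e.1.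

Definition ends (e : edgeT) : {set vertT} :=
  if #|e.2| == 1%N then inr e |: (@inl _ edgeT @: e.2) else @inl _ edgeT @: e.2.

Definition is_matching (M : {set edgeT}) : bool :=
  [forall e in M, is_edge e] &&
  [forall e in M, forall f in M, (e != f) ==> [disjoint ends e & ends f]].

Definition is_vertex_cover (C : {set vertT}) : bool :=
  [forall e, is_edge e ==> ~~ [disjoint ends e & C]].

Definition matching_number : nat :=
  \max_(M : {set edgeT} | is_matching M) #|M|.

Definition vertex_cover_number : nat :=
  \big[minn/#|{: vertT}|]_(C : {set vertT} | is_vertex_cover C) #|C|.

End Storage.

Definition is_simplex_generator (k : nat) (G : 'M['F_2]_(k, 2 ^ k - 1)) : Prop :=
  [/\ injective (fun j => col j G),
      (forall j, col j G != 0) &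
      (forall v : 'cV['F_2]_k, v != 0 -> exists j, col j G = v)].

(* Main.v *)
Require Import Defs.
From mathcomp Require Import all_boot all_order all_algebra.
From mathcomp Require Import reals.
Import Order.TTheory GRing.Theory Num.Theory.
Local Open Scope ring_scope.
Set Implicit Arguments. Unset Strict Implicit. Unset Printing Implicit Defensive.

Lemma F2_cases (x : 'F_2) : x = 0 \/ x = 1.
Proof.
have H := ltn_ord x. rewrite [X in (_ < X)%N]/= in H.
case E: (nat_of_ord x) H => [|[|m]] H.
- by left; apply/val_inj.
- by right; apply/val_inj.
- by [].
Qed.

Lemma F2_xx (x : 'F_2) : x + x = 0.
Proof. by case: (F2_cases x) => ->; apply/val_inj. Qed.

Lemma vec_xx k (v : 'cV['F_2]_k) : v + v = 0.
Proof. by apply/matrixP => i j; rewrite !mxE F2_xx. Qed.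

Lemma vec_eq0 k (u v : 'cV['F_2]_k) : u + v = 0 -> u = v.
Proof. by move=> H; rewrite -(addr0 u) -(vec_xx v) addrA H add0r. Qed.

Definition fw k (v : 'cV['F_2]_k) : 'F_2 := \sum_i v i 0.

Lemma fwD k (u v : 'cV['F_2]_k) : fw (u + v) = fw u + fw v.
Proof. by rewrite /fw -big_split; apply: eq_bigr => i _; rewrite mxE. Qed.

Lemma fw_unit k (i : 'I_k) : fw (unitv i) = 1.
Proof.
rewrite /fw (bigD1 i) //= big1 ?addr0; first by rewrite /unitv mxE !eqxx.
by move=> j Hj; rewrite /unitv mxE (negbTE Hj).
Qed.

Lemma fw0 k : fw (0 : 'cV['F_2]_k) = 0.
Proof. by rewrite /fw big1 // => i _; rewrite mxE. Qed.

Lemma unitv_nz k (i : 'I_k) : unitv i != 0.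
Proof. by apply/eqP => H; have := fw_unit i; rewrite H fw0 => /eqP. Qed.

Section S.
Variables (k n : nat) (G : 'M['F_2]_(k, n)).
Definition C0 : {set 'I_n} := [set j | fw (col j G) == 1].
Definition Tset (e0 : 'cV['F_2]_k) (j : 'I_n) : {set 'I_n} :=
  [set l | (col l G == col j G) || (col l G == col j G + e0)].
End S.

Lemma cover_hit k n (G : 'M['F_2]_(k, n)) i S :
  S \in recsets G i -> exists2 l, l \in S & l \in C0 G.
Proof.
rewrite inE => /orP [/existsP [r /andP [/eqP -> /eqP Hr]] |
  /existsP [a /existsP [b /and3P [_ /eqP -> /eqP Hab]]]].
- by exists r; rewrite !inE ?eqxx // Hr fw_unit.
- have E := fw_unit i; rewrite -Hab fwD in E.
  case Ha: (fw (col a G) == 1); first by exists a; rewrite !inE ?eqxx ?Ha.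
  exists b; first by rewrite !inE eqxx orbT.
  rewrite inE; case: (F2_cases (fw (col a G))) => Ha0; last by rewrite Ha0 eqxx in Ha.
  by rewrite -E Ha0 add0r.
Qed.

Lemma disj_hit (I U : finType) (E : {set I}) (h : I -> {set U}) (C : {set U}) :
  (forall e f, e \in E -> f \in E -> e != f -> [disjoint h e & h f]) ->
  (forall e, e \in E -> ~~ [disjoint h e & C]) -> (#|E| <= #|C|)%N.
Proof.
move=> Hd Hh.
pose p e := [pick x in h e :&: C].
have Hp : forall e, e \in E -> exists2 x, p e = Some x & x \in h e :&: C.
  move=> e He; rewrite /p; case: pickP => [x Hx|H0]; first by exists x.
  have := Hh e He; rewrite -setI_eq0 => /set0Pn [x Hx].
  by have := H0 x; rewrite Hx.
have Hinj : {in E &, injective p}.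
  move=> e f He Hf Epf; apply/eqP; apply/negPn/negP => Hne.
  have [x Hx Hxe] := Hp e He; have [y Hy Hyf] := Hp f Hf.
  rewrite Hx Hy in Epf; case: Epf => Exy; subst y.
  move: Hxe Hyf; rewrite !inE => /andP [Hxe _] /andP [Hxf _].
  by rewrite (disjointFr (Hd e f He Hf Hne) Hxe) in Hxf.
rewrite -(card_in_imset Hinj) -(card_imset C (@Some_inj _)).
apply: subset_leq_card; apply/subsetP => _ /imsetP [e He ->].
have [x Hx Hxe] := Hp e He; rewrite Hx; apply: imset_f.
by move: Hxe; rewrite inE => /andP [_].
Qed.

Section Main.
Variables (k n : nat) (G : 'M['F_2]_(k, n)).
Hypothesis hinj : injective (fun j => col j G).
Hypothesis hnz : forall j, col j G != 0.
Hypothesis hsurj : forall v : 'cV['F_2]_k, v != 0 -> exists j, col j G = v.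
Variable i0 : 'I_k.

Let e0 := unitv i0.
Let T := Tset G e0.

Lemma hinj' a b : col a G = col b G -> a = b.
Proof. exact: (@hinj a b). Qed.

Lemma T_self j : j \in T j.
Proof. by rewrite inE eqxx. Qed.

Lemma T_rec j : j \in C0 G -> T j \in recsets G i0.
Proof.
move=> Hj; rewrite inE; case He: (col j G == e0).
- apply/orP; left; apply/existsP; exists j; rewrite He andbT; apply/eqP/setP => l.
  rewrite !inE (eqP He) vec_xx (negbTE (hnz l)) orbF -(eqP He).
  by apply/eqP/eqP => [/hinj'|->].
- have Hnz : col j G + e0 != 0.
    by apply/negP => /eqP /vec_eq0 H; rewrite H eqxx in He.
  have [b Hb] := hsurj Hnz.
  apply/orP; right; apply/existsP; exists j; apply/existsP; exists b.
  apply/and3P; split.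
  + apply/eqP => Ejb; rewrite -Ejb in Hb.
    have : col j G + 0 = col j G + e0 by rewrite addr0.
    by move/addrI => H; move: (unitv_nz i0); rewrite -/e0 -H eqxx.
  + apply/eqP/setP => l; rewrite !inE -Hb.
    by congr (_ || _); apply/eqP/eqP => [/hinj'|->].
  + by rewrite Hb addrA vec_xx add0r.
Qed.

Lemma T_uniq j j' l : j \in C0 G -> j' \in C0 G -> l \in T j -> l \in T j' -> j = j'.
Proof.
rewrite !inE => /eqP Hj /eqP Hj'.
case/orP => /eqP H1; case/orP => /eqP H2.
- by apply: hinj'; rewrite -H1 -H2.
- have := congr1 (@fw _) (etrans (esym H1) H2).
  by rewrite fwD fw_unit Hj Hj' => /eqP.
- have := congr1 (@fw _) (etrans (esym H1) H2).
  by rewrite fwD fw_unit Hj Hj' => /eqP.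
- by apply: hinj'; apply: (addIr e0); rewrite -H1 -H2.
Qed.

Lemma T_inj : {in C0 G &, injective T}.
Proof.
move=> j j' Hj Hj' E; apply: (T_uniq Hj Hj' (T_self j)); by rewrite -E T_self.
Qed.


Lemma in_inl (A : {set 'I_n}) (l : 'I_n) :
  ((inl l : vertT k n) \in (@inl _ (edgeT k n)) @: A) = (l \in A).
Proof. by apply: mem_imset => x y []. Qed.

Lemma in_inr (A : {set 'I_n}) (e : edgeT k n) :
  ((inr e : vertT k n) \in (@inl _ (edgeT k n)) @: A) = false.
Proof. by apply/imsetP => [[y _]]. Qed.

Lemma ends_sub (e : edgeT k n) : ends e \subset inr e |: (@inl _ (edgeT k n)) @: e.2.
Proof. by rewrite /ends; case: ifP => _; [exact: subxx | exact: subsetUr]. Qed.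

Lemma ends_inl (e : edgeT k n) : (@inl _ (edgeT k n)) @: e.2 \subset ends e.
Proof. by rewrite /ends; case: ifP => _; [exact: subsetUr | exact: subxx]. Qed.

Definition M0 : {set edgeT k n} := [set (i0, T j) | j in C0 G].

Lemma card_M0 : #|M0| = #|C0 G|.
Proof.
apply: card_in_imset => j j' Hj Hj' [E]; exact: T_inj.
Qed.

Lemma M0_matching : is_matching G M0.
Proof.
apply/andP; split.
- apply/forall_inP => e /imsetP [j Hj ->]; rewrite /is_edge /=; exact: T_rec.
- apply/forall_inP => e /imsetP [j Hj ->]; apply/forall_inP => f /imsetP [j' Hj' ->].
  apply/implyP => Hne.
  apply: (disjointW (ends_sub _) (ends_sub _)).
  rewrite -setI_eq0; apply/eqP/setP => x; rewrite !inE.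
  case: x => [l|e'].
  + rewrite !in_inl /=; apply/negP => /andP [H1 H2].
    by rewrite (T_uniq Hj Hj' H1 H2) eqxx in Hne.
  + rewrite !in_inr !orbF; apply/negP => /andP [/eqP [->] /eqP [E]].
    by rewrite E eqxx in Hne.
Qed.

Lemma cover0 : is_vertex_cover G ((@inl _ (edgeT k n)) @: C0 G).
Proof.
apply/forallP => e; apply/implyP => He.
have [l HlS HlC] := cover_hit He.
rewrite -setI_eq0; apply/set0Pn; exists (inl l).
rewrite inE in_inl HlC andbT; apply: (subsetP (ends_inl e)); by rewrite in_inl.
Qed.

Lemma card_inl : #|(@inl _ (edgeT k n)) @: C0 G| = #|C0 G|.
Proof. by apply: card_imset => x y []. Qed.

Lemma match_le M : is_matching G M -> (#|M| <= #|C0 G|)%N.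
Proof.
case/andP => /forall_inP He /forall_inP Hd.
rewrite -card_inl; apply: (disj_hit (h := @ends k n)).
- move=> e f Hef Hf Hne; have := Hd e Hef => /forall_inP /(_ f Hf); by rewrite Hne.
- move=> e Hem; have := cover0 => /forallP /(_ e); by rewrite He.
Qed.

Lemma cover_ge C : is_vertex_cover G C -> (#|C0 G| <= #|C|)%N.
Proof.
move=> HC; rewrite -card_M0; apply: (disj_hit (h := @ends k n)).
- move=> e f Hef Hf Hne; have := M0_matching => /andP [_ /forall_inP Hd].
  have := Hd e Hef => /forall_inP /(_ f Hf); by rewrite Hne.
- move=> e Hem; have := M0_matching => /andP [/forall_inP He _].
  by have := HC => /forallP /(_ e); rewrite He.
Qed.


Lemma card_O : (#|[set v : 'cV['F_2]_k | fw v == 1%R]| * 2 = 2 ^ k)%N.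
Proof.
set O := [set v : 'cV['F_2]_k | fw v == 1].
have tinj : injective (fun v : 'cV['F_2]_k => v + e0) by exact: addIr.
have Hc : [set v + e0 | v in O] = ~: O.
  apply/setP => v; rewrite !inE; apply/imsetP/idP.
  - move=> [w]; rewrite inE => /eqP Hw ->; rewrite fwD Hw fw_unit; by [].
  - move=> Hv; exists (v + e0); last by rewrite -addrA vec_xx addr0.
    rewrite inE fwD fw_unit; case: (F2_cases (fw v)) => H; last by rewrite H eqxx in Hv.
    by rewrite H add0r.
have := cardsC O; rewrite -Hc card_imset // card_mx card_Fp // muln1 => <-.
by rewrite muln2 addnn.
Qed.

Lemma card_C0 : #|C0 G| = (2 ^ (k - 1))%N.
Proof.
have -> : #|C0 G| = #|[set v : 'cV['F_2]_k | fw v == 1]|.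
  rewrite -(card_imset (C0 G) hinj); apply: eq_card => v; rewrite [in RHS]inE.
  apply/imsetP/idP.
  - by move=> [j]; rewrite inE => Hj ->.
  - move=> Hv; have Hnz : v != 0 by apply/eqP => E; rewrite E fw0 in Hv.
    have [j Hj] := hsurj Hnz; exists j => //; by rewrite inE Hj.
have := card_O; have : (0 < k)%N by case: (k) i0 => [[]|].
case: k => [//|k'] _; rewrite subn1 /= expnS mulnC => /eqP.
by rewrite eqn_pmul2l // => /eqP.
Qed.

Variable R : realType.

Lemma cap_upper (lam : 'I_k -> R) : in_service_region G lam ->
  \sum_(i < k) lam i <= #|C0 G|%:R.
Proof.
move=> [x [Hx0 Hsum Hload]].
have step : forall i, lam i <= \sum_(l in C0 G) \sum_(S in recsets G i | l \in S) x i S.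
  move=> i; rewrite -Hsum.
  apply: (@le_trans _ _ (\sum_(S in recsets G i) \sum_(l in C0 G | l \in S) x i S)).
    apply: ler_sum => S HS; have [l HlS HlC] := cover_hit HS.
    rewrite (bigD1 l) /=; last by rewrite HlC HlS.
    by rewrite lerDl sumr_ge0 // => j _; apply: Hx0.
  under eq_bigr do rewrite big_mkcondr.
  rewrite exchange_big /=.
  by apply: ler_sum => l _; rewrite big_mkcondr.
apply: (@le_trans _ _ (\sum_(i < k) \sum_(l in C0 G) \sum_(S in recsets G i | l \in S) x i S)).
  by apply: ler_sum => i _; apply: step.
rewrite exchange_big /= -sumr_const.
by apply: ler_sum => l _; apply: Hload.
Qed.

Definition xopt (i : 'I_k) (S : {set 'I_n}) : R :=
  if (i == i0) && (S \in [set T j | j in C0 G]) then 1 else 0.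

Lemma TS_sub S : S \in [set T j | j in C0 G] -> S \in recsets G i0.
Proof. by case/imsetP => j Hj ->; apply: T_rec. Qed.

Lemma cap_lower : in_service_region G
   (fun i : 'I_k => if i == i0 then (#|C0 G|%:R : R) else 0).
Proof.
exists xopt; split.
- by move=> i S _; rewrite /xopt; case: ifP.
- move=> i; case: (eqVneq i i0) => [->|Hi].
  + rewrite big_mkcond /=.
    rewrite (eq_bigr (fun S => if S \in [set T j | j in C0 G] then 1 else 0)); last first.
      move=> S _; rewrite /xopt eqxx /=; case: ifP => // HS.
      by case: ifP => // HT; rewrite (TS_sub HT) in HS.
    rewrite -big_mkcond sumr_const.
    by rewrite (card_in_imset (@T_inj)).
  + transitivity (\sum_(S in recsets G i) (0:R)); first by apply: eq_bigr => S _; rewrite /xopt (negbTE Hi).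
    by rewrite big1_eq.
- move=> l.
  have Hz : \sum_(i < k | i != i0) \sum_(S in recsets G i | l \in S) xopt i S = 0.
    by apply: big1 => i Hi; apply: big1 => S _; rewrite /xopt (negbTE Hi).
  rewrite (bigD1 i0) //= Hz addr0.
  case: (pickP [pred S | (S \in [set T j | j in C0 G]) && (l \in S)]) => [S0 /andP [HS0 HlS0] | Hn].
  + rewrite (bigD1 S0) /=; last by rewrite HlS0 andbT; apply: TS_sub.
    rewrite /xopt ?eqxx HS0 /= big1 ?addr0 // => S /andP [/andP [_ HlS] HSS0].
    case: ifP => // HS; exfalso.
    move: HS HS0 HSS0 HlS HlS0 => /imsetP [j Hj ->] /imsetP [j' Hj' ->].
    move=> Hne H1 H2; by rewrite (T_uniq Hj Hj' H1 H2) eqxx in Hne.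
  + rewrite big1 ?ler01 // => S /andP [_ HlS].
    by have := Hn S; rewrite /= HlS andbT /xopt eqxx /= => ->.
Qed.

End Main.

Lemma bigmin_le (I : finType) (P : pred I) (F : I -> nat) x0 i :
  P i -> (\big[minn/x0]_(j | P j) F j <= F i)%N.
Proof.
move=> Pi; have : i \in index_enum I by rewrite mem_index_enum.
elim: (index_enum I) => [//|j r IH]; rewrite inE big_cons => /orP [/eqP <-| /IH H].
- by rewrite Pi geq_minl.
- by case: ifP => _ //; rewrite geq_min H orbT.
Qed.

Theorem corollary2 (R : realType) (k : nat) (G : 'M['F_2]_(k, 2 ^ k - 1)) :
  (1 <= k)%N -> is_simplex_generator G ->
  [/\ matching_number G = (2 ^ (k - 1))%N,
      is_service_capacity G (R:=R) (2 ^ (k - 1))%:R &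
      vertex_cover_number G = (2 ^ (k - 1))%N].
Proof.
move=> hk [hinj hnz hsurj].
pose i0 : 'I_k := Ordinal hk.
have Hc : #|C0 G| = (2 ^ (k - 1))%N := card_C0 hinj hsurj i0.
split.
- apply/eqP; rewrite eqn_leq; apply/andP; split.
  + apply/bigmax_leqP => M HM; rewrite -Hc; exact: match_le.
  + rewrite -Hc -(card_M0 hinj i0).
    exact: (leq_bigmax_cond _ (M0_matching hinj hnz hsurj i0)).
- split.
  + exists (fun i => if i == i0 then (#|C0 G|%:R : R) else 0); split.
      exact: (cap_lower hinj hnz hsurj i0).
    rewrite (bigD1 i0) //= ?eqxx big1 ?addr0 ?Hc // => i /negbTE -> //.
  + by move=> lam Hl; rewrite -Hc; exact: cap_upper.
- apply/eqP; rewrite eqn_leq; apply/andP; split.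
  + rewrite -Hc -card_inl; apply: bigmin_le; exact: cover0.
  + rewrite -Hc; apply: (big_ind (fun m => #|C0 G| <= m)%N).
    * by rewrite -card_inl; apply: max_card.
    * by move=> x y Hx Hy; rewrite leq_min Hx Hy.
    * by move=> C HC; exact: (cover_ge hinj hnz hsurj i0).
Qed.
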